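(* Let $a,b>0$ with $a+b\leq1$, let $c\geq0$, and let $$B_{a,b}(x)={}_2F_1(a,b;a+b;x)-\frac{a(a+1)b(b+1)}{(a+b)(a+b+1)}\,{}_2F_1(a,b;a+b+2;x)\,\big(c-\log(1-x)\big).$$ Then $\big(-B_{a,b}'\big)^{(n)}(x)>0$ for all $n\geq0$ and all $x\in(0,1)$.
   Context: ${}_2F_1$ is the Gauss hypergeometric function. *)

(* Defs.v *)
From Stdlib Require Import Reals Factorial.
From Coquelicot Require Import Coquelicot.
Open Scope R_scope.

Fixpoint poch (q : R) (k : nat) : R :=
  match k with
  | O => 1
  | S k' => poch q k' * (q + INR k')
  end.

Definition hyp2F1 (a b c x : R) : R :=
  PSeries (fun k => poch a k * poch b k / (poch c k * INR (fact k))) x.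

Definition Bab (a b c : R) (x : R) : R :=
  hyp2F1 a b (a + b) x
  - (a * (a + 1) * b * (b + 1)) / ((a + b) * (a + b + 1))
    * hyp2F1 a b (a + b + 2) x * (c - ln (1 - x)).

(* Main.v *)
Require Import Defs.
From Stdlib Require Import Reals.
From Coquelicot Require Import Coquelicot.
From Stdlib Require Import Factorial Lra Lia Psatz.
Open Scope R_scope.

Definition fc (a b q : R) (n : nat) : R :=
  poch a n * poch b n / (poch q n * INR (fact n)).

Lemma poch_pos q n : 0 < q -> 0 < poch q n.
Proof.
  intro hq; induction n as [|n IH]; simpl; [lra|].
  apply Rmult_lt_0_compat; auto. pose proof (pos_INR n); lra.
Qed.

Lemma fc_pos a b q n : 0 < a -> 0 < b -> 0 < q -> 0 < fc a b q n.
Proof.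
  intros; unfold fc. apply Rdiv_lt_0_compat.
  apply Rmult_lt_0_compat; apply poch_pos; auto.
  apply Rmult_lt_0_compat. apply poch_pos; auto. apply lt_0_INR, lt_O_fact.
Qed.

Lemma fc_rec a b q n : 0 < a -> 0 < b -> 0 < q ->
  fc a b q (S n) = fc a b q n * ((a + INR n) * (b + INR n)) / ((q + INR n) * INR (S n)).
Proof.
  intros ha hb hq. unfold fc. simpl poch.
  replace (fact (S n)) with (S n * fact n)%nat by reflexivity.
  rewrite mult_INR.
  pose proof (poch_pos q n hq). pose proof (lt_0_INR _ (lt_O_fact n)).
  pose proof (pos_INR n). rewrite S_INR.
  field. repeat split; lra.
Qed.

Lemma poch_shift2 s n : poch (s+2) n * (s*(s+1)) = poch s n * ((s + INR n)*(s+INR n+1)).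
Proof.
  induction n as [|n IH]; simpl poch. simpl; ring.
  rewrite S_INR. 
  replace (poch (s + 2) n * (s + 2 + INR n) * (s * (s + 1))) with
    ((poch (s + 2) n * (s * (s + 1))) * (s + 2 + INR n)) by ring.
  rewrite IH. ring.
Qed.

Lemma g_f a b s n : 0 < a -> 0 < b -> 0 < s ->
  fc a b (s+2) n = fc a b s n * (s*(s+1)) / ((s+INR n)*(s+INR n+1)).
Proof.
  intros ha hb hs. unfold fc.
  pose proof (poch_pos s n hs). pose proof (poch_pos (s+2) n ltac:(lra)).
  pose proof (lt_0_INR _ (lt_O_fact n)). pose proof (pos_INR n).
  pose proof (poch_shift2 s n).
  apply (Rmult_eq_reg_r ((poch (s + 2) n) * ((s + INR n) * (s + INR n + 1)))).
  2: { apply Rgt_not_eq. apply Rmult_lt_0_compat; auto. nra. }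
  set (P2 := poch (s+2) n) in *. set (P := poch s n) in *.
  set (A := poch a n * poch b n). set (F := INR (fact n)) in *.
  set (Q := (s + INR n) * (s + INR n + 1)) in *.
  assert (0 < Q) by (unfold Q; nra).
  replace (A / (P2 * F) * (P2 * Q)) with (A * Q / F) by (field; lra).
  replace (A / (P * F) * (s * (s + 1)) / Q * (P2 * Q)) with (A * (P2 * (s*(s+1))) / (P * F)) by (field; lra).
  rewrite H3. field. lra.
Qed.

Lemma f_le1 a b n : 0 < a -> 0 < b -> a + b <= 1 -> fc a b (a+b) n <= 1.
Proof.
  intros ha hb hab. induction n as [|n IH].
  - unfold fc; simpl; lra.
  - rewrite fc_rec; try lra. pose proof (fc_pos a b (a+b) n ha hb ltac:(lra)).
    pose proof (pos_INR n). rewrite S_INR.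
    assert (hq: 0 < (a + b + INR n) * (INR n + 1)) by nra.
    assert (hr: (a + INR n) * (b + INR n) <= (a + b + INR n) * (INR n + 1)) by nra.
    apply (Rmult_le_reg_r ((a + b + INR n) * (INR n + 1))); auto.
    unfold Rdiv. rewrite Rmult_assoc, Rinv_l by lra. rewrite Rmult_1_r, Rmult_1_l.
    nra.
Qed.

Lemma g_le_f a b n : 0 < a -> 0 < b ->
  fc a b (a+b+2) n <= fc a b (a+b) n.
Proof.
  intros ha hb. rewrite g_f by lra.
  pose proof (fc_pos a b (a+b) n ha hb ltac:(lra)). pose proof (pos_INR n).
  set (s := a+b) in *. set (F := fc a b s n) in *.
  assert (0 < (s + INR n) * (s + INR n + 1)) by (unfold s; nra).
  set (Q := (s + INR n) * (s + INR n + 1)) in *.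
  unfold Rdiv; rewrite Rmult_assoc; rewrite <- (Rmult_1_r F) at 2.
  apply Rmult_le_compat_l; [lra|].
  apply (Rmult_le_reg_r Q); auto. rewrite Rmult_assoc, Rinv_l, Rmult_1_r, Rmult_1_l by lra.
  unfold Q, s; nra.
Qed.

Definition Kc (a b : R) := (a * (a + 1) * b * (b + 1)) / ((a + b) * (a + b + 1)).

Lemma sum_id a b m : 0 < a -> 0 < b ->
  Kc a b * sum_f_R0 (fc a b (a+b+2)) m =
  INR (S m) * fc a b (a+b) (S m) * (INR (S m) + (a+b) + a*b) / (INR (S m) + (a+b)).
Proof.
  intros ha hb. induction m as [|m IH].
  - simpl sum_f_R0. rewrite fc_rec by lra. unfold fc, Kc; simpl. field. lra.
  - rewrite tech5, Rmult_plus_distr_l, IH.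
    rewrite (g_f a b (a+b) (S m)) by lra.
    rewrite (fc_rec a b (a+b) (S m)) by lra.
    pose proof (fc_pos a b (a+b) (S m) ha hb ltac:(lra)).
    set (F := fc a b (a+b) (S m)) in *.
    rewrite !S_INR. pose proof (pos_INR m).
    unfold Kc. field. repeat split; nra.
Qed.

Definition lc (n : nat) : R := match n with O => 0 | S _ => / INR n end.

Lemma lc_bounds n : 0 <= lc n <= 1.
Proof.
  destruct n; [simpl; lra|]. change (lc (S n)) with (/ INR (S n)). pose proof (pos_INR n). rewrite S_INR.
  split. left; apply Rinv_0_lt_compat; lra.
  rewrite <- Rinv_1. apply Rinv_le_contravar; lra.
Qed.

Lemma mult_lower (g : nat -> R) m : (forall k, 0 <= g k) ->
  sum_f_R0 g m / INR (S m) <= PS_mult g lc (S m).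
Proof.
  intros hg. unfold PS_mult. rewrite tech5. rewrite Nat.sub_diag. simpl (lc 0).
  rewrite Rmult_0_r, Rplus_0_r. unfold Rdiv. rewrite Rmult_comm, scal_sum.
  apply sum_Rle. intros k hk.
  replace (S m - k)%nat with (S (m - k)) by lia. change (lc (S (m-k))) with (/ INR (S (m-k))).
  apply Rmult_le_compat_l; auto.
  apply Rinv_le_contravar. apply lt_0_INR; lia. apply le_INR; lia.
Qed.

Lemma mult_bounds (g : nat -> R) n : (forall k, 0 <= g k <= 1) ->
  0 <= PS_mult g lc n <= INR (S n).
Proof.
  intros hg. unfold PS_mult. split.
  - rewrite <- (Rmult_0_l (INR (S n))), <- sum_cte. apply sum_Rle. intros k _.
    pose proof (hg k); pose proof (lc_bounds (n-k)); nra.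
  - rewrite <- (Rmult_1_l (INR (S n))), <- sum_cte. apply sum_Rle. intros k _.
    pose proof (hg k); pose proof (lc_bounds (n-k)); nra.
Qed.

Definition beta (a b c : R) (n : nat) : R :=
  fc a b (a+b) n - Kc a b * c * fc a b (a+b+2) n - Kc a b * PS_mult (fc a b (a+b+2)) lc n.

Lemma Kc_pos a b : 0 < a -> 0 < b -> 0 < Kc a b.
Proof. intros; unfold Kc. apply Rdiv_lt_0_compat; nra. Qed.

Lemma beta_neg a b c m : 0 < a -> 0 < b -> 0 <= c -> beta a b c (S m) < 0.
Proof.
  intros ha hb hc. unfold beta.
  pose proof (Kc_pos a b ha hb).
  pose proof (fc_pos a b (a+b+2) (S m) ha hb ltac:(lra)).
  pose proof (mult_lower (fc a b (a+b+2)) m (fun k => Rlt_le _ _ (fc_pos a b (a+b+2) k ha hb ltac:(lra)))).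
  pose proof (sum_id a b m ha hb).
  pose proof (fc_pos a b (a+b) (S m) ha hb ltac:(lra)).
  set (F := fc a b (a+b) (S m)) in *.
  set (S0 := sum_f_R0 (fc a b (a + b + 2)) m) in *.
  set (M := PS_mult (fc a b (a + b + 2)) lc (S m)) in *.
  set (n := INR (S m)) in *. assert (0 < n) by (apply lt_0_INR; lia).
  assert (Kc a b * S0 / n <= Kc a b * M).
  { unfold Rdiv. rewrite Rmult_assoc. apply Rmult_le_compat_l; lra. }
  assert (Kc a b * S0 / n = F * (n + (a+b) + a*b) / (n + (a+b))).
  { rewrite H2. field. lra. }
  assert (F < F * (n + (a + b) + a * b) / (n + (a + b))).
  { assert (E: F * (n + (a + b) + a * b) / (n + (a + b)) = F + F * (a*b) / (n + (a+b))) by (field; lra).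
    rewrite E. assert (0 < F * (a*b) / (n + (a+b))). apply Rdiv_lt_0_compat; [apply Rmult_lt_0_compat; nra | lra]. lra. }
  assert (0 <= Kc a b * c * fc a b (a + b + 2) (S m)).
  { apply Rmult_le_pos; [apply Rmult_le_pos|]; lra. }
  lra.
Qed.

Lemma radius_cmp (u v : nat -> R) : (forall n, Rabs (u n) <= Rabs (v n)) ->
  Rbar_le (CV_radius v) (CV_radius u).
Proof.
  intros H. eapply is_lub_Rbar_subset; [|apply CV_radius_bounded|apply CV_radius_bounded].
  intros r [M HM]. exists M. intros n. eapply Rle_trans; [|apply (HM n)].
  rewrite !Rabs_mult. apply Rmult_le_compat_r; [apply Rabs_pos|auto].
Qed.

Lemma radius_one : Rbar_le 1 (CV_radius (fun _ => 1)).
Proof.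
  destruct (CV_radius_bounded (fun _ => 1)) as [Hub _]. apply Hub.
  exists 1. intros n. rewrite pow1, Rmult_1_l, Rabs_R1. lra.
Qed.

Lemma radius_bounded1 (u : nat -> R) : (forall n, Rabs (u n) <= 1) ->
  Rbar_le 1 (CV_radius u).
Proof.
  intros H. eapply Rbar_le_trans; [apply radius_one|]. apply radius_cmp.
  intros n. rewrite Rabs_R1; auto.
Qed.

Lemma radius_lin (u : nat -> R) M : 0 < M -> (forall n, Rabs (u n) <= M * INR (S n)) ->
  Rbar_le 1 (CV_radius u).
Proof.
  intros hM H. eapply Rbar_le_trans; [apply radius_one|].
  rewrite <- CV_radius_derive. rewrite <- (CV_radius_scal M) by lra.
  apply radius_cmp. intros n. unfold PS_scal, PS_derive.
  change (scal M (INR (S n) * 1)) with (M * (INR (S n) * 1)). rewrite Rmult_1_r.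
  rewrite (Rabs_right (M * _)); auto. apply Rle_ge, Rmult_le_pos. lra. apply pos_INR.
Qed.


Lemma f_b (a b c : R) (ha : 0 < a) (hb : 0 < b) (hab : a + b <= 1) (hc : 0 <= c) n : 0 <= fc a b (a+b) n <= 1.
Proof. split. left; apply fc_pos; lra. apply f_le1; lra. Qed.
Lemma g_b (a b c : R) (ha : 0 < a) (hb : 0 < b) (hab : a + b <= 1) (hc : 0 <= c) n : 0 <= fc a b (a+b+2) n <= 1.
Proof. split. left; apply fc_pos; lra. eapply Rle_trans. apply g_le_f; lra. apply f_le1; lra. Qed.

Lemma rad_f (a b c : R) (ha : 0 < a) (hb : 0 < b) (hab : a + b <= 1) (hc : 0 <= c) : Rbar_le 1 (CV_radius (fc a b (a+b))).
Proof. apply radius_bounded1. intros n; destruct (f_b a b c ha hb hab hc n); rewrite Rabs_right; lra. Qed.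
Lemma rad_g (a b c : R) (ha : 0 < a) (hb : 0 < b) (hab : a + b <= 1) (hc : 0 <= c) : Rbar_le 1 (CV_radius (fc a b (a+b+2))).
Proof. apply radius_bounded1. intros n; destruct (g_b a b c ha hb hab hc n); rewrite Rabs_right; lra. Qed.
Lemma rad_l : Rbar_le 1 (CV_radius lc).
Proof. apply radius_bounded1. intros n; destruct (lc_bounds n); rewrite Rabs_right; lra. Qed.

Lemma rad_beta (a b c : R) (ha : 0 < a) (hb : 0 < b) (hab : a + b <= 1) (hc : 0 <= c) : Rbar_le 1 (CV_radius (beta a b c)).
Proof.
  pose proof (Kc_pos a b ha hb).
  apply (radius_lin _ (1 + Kc a b * c + Kc a b)). nra.
  intros n. unfold beta.
  destruct (f_b a b c ha hb hab hc n), (g_b a b c ha hb hab hc n).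
  destruct (mult_bounds (fc a b (a+b+2)) n (g_b a b c ha hb hab hc)).
  pose proof (pos_INR n). rewrite S_INR in *.
  set (K := Kc a b) in *. set (G := fc a b (a + b + 2) n) in *.
  set (F := fc a b (a + b) n) in *. set (P := PS_mult (fc a b (a + b + 2)) lc n) in *.
  assert (0 <= K * c) by (apply Rmult_le_pos; lra).
  assert (0 <= K * c * G <= K * c) by (split; [apply Rmult_le_pos; lra| rewrite <- (Rmult_1_r (K*c)) at 2; apply Rmult_le_compat_l; lra]).
  assert (0 <= K * P <= K * (INR n + 1)) by (split; [apply Rmult_le_pos; lra| apply Rmult_le_compat_l; lra]).
  apply Rabs_le. split; nra.
Qed.

Lemma lt1 t : Rabs t < 1 -> forall u : nat -> R, Rbar_le 1 (CV_radius u) -> Rbar_lt (Rabs t) (CV_radius u).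
Proof. intros Ht u Hu. eapply Rbar_lt_le_trans; [|apply Hu]. simpl. auto. Qed.

Lemma log_series t : Rabs t < 1 -> ln (1 - t) = - PSeries lc t.
Proof.
  intros Ht.
  set (h := fun u => PSeries lc u + ln (1 - u)).
  assert (Hd: forall u, Rabs (u - 0) <= Rabs t -> is_derive h u 0).
  { intros u Hu. rewrite Rminus_0_r in Hu.
    assert (Hu1: Rabs u < 1) by lra.
    assert (0 < 1 - u) by (apply Rabs_lt_between in Hu1; lra).
    unfold h. replace 0 with (PSeries (PS_derive lc) u + (- / (1 - u))).
    apply (is_derive_plus (PSeries lc) (fun u => ln (1 - u))). apply is_derive_PSeries. apply lt1; auto. apply rad_l.
    auto_derive. lra. field. lra.
    rewrite (PSeries_ext _ (fun _ => 1)).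
    2: { intros n. unfold PS_derive. change (lc (S n)) with (/ INR (S n)).
         field. apply not_0_INR. lia. }
    unfold PSeries. rewrite (Series_ext _ (fun k => u ^ k)).
    2: { intros k; ring. }
    rewrite Series_geom; auto. ring. }
  destruct (MVT_cor4 h (fun _ => 0) 0 (Rabs t) Hd t) as [c0 [Hc0 _]].
  rewrite Rminus_0_r; lra.
  unfold h in Hc0. rewrite PSeries_0 in Hc0. simpl lc in Hc0.
  rewrite Rminus_0_r, ln_1 in Hc0. lra.
Qed.

Lemma Bab_series (a b c : R) (ha : 0 < a) (hb : 0 < b) (hab : a + b <= 1) (hc : 0 <= c) t : Rabs t < 1 -> Bab a b c t = PSeries (beta a b c) t.
Proof.
  intros Ht. unfold Bab, hyp2F1. rewrite log_series by auto.
  change (PSeries (fun k => poch a k * poch b k / (poch (a + b) k * INR (fact k))) t)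
    with (PSeries (fc a b (a+b)) t).
  change (PSeries (fun k => poch a k * poch b k / (poch (a + b + 2) k * INR (fact k))) t)
    with (PSeries (fc a b (a+b+2)) t).
  change ((a * (a + 1) * b * (b + 1)) / ((a + b) * (a + b + 1))) with (Kc a b).
  rewrite (PSeries_ext (beta a b c) (PS_minus (PS_minus (fc a b (a+b)) (PS_scal (Kc a b * c) (fc a b (a+b+2))))
      (PS_scal (Kc a b) (PS_mult (fc a b (a+b+2)) lc)))).
  2: { intros n. unfold beta, PS_minus, PS_scal. unfold plus, opp, scal; simpl. unfold mult; simpl. ring. }
  pose proof (lt1 t Ht _ (rad_f a b c ha hb hab hc)). pose proof (lt1 t Ht _ (rad_g a b c ha hb hab hc)). pose proof (lt1 t Ht _ rad_l).
  pose proof (Kc_pos a b ha hb).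
  assert (E1: ex_pseries (fc a b (a+b)) t) by (apply CV_radius_inside; auto).
  assert (E2: ex_pseries (PS_scal (Kc a b * c) (fc a b (a+b+2))) t).
  { apply ex_pseries_scal. apply Rmult_comm. apply CV_radius_inside; auto. }
  assert (E3: ex_pseries (PS_scal (Kc a b) (PS_mult (fc a b (a+b+2)) lc)) t).
  { apply ex_pseries_scal. apply Rmult_comm. apply ex_pseries_mult; auto. }
  rewrite PSeries_minus; auto. rewrite PSeries_minus; auto.
  rewrite !PSeries_scal, PSeries_mult; auto. ring.
  apply ex_pseries_minus; auto.
Qed.

Lemma loc_lt1 t : Rabs t < 1 -> locally t (fun u => Rabs u < 1).
Proof.
  intros Ht. assert (He: 0 < 1 - Rabs t) by lra.
  exists (mkposreal _ He). intros y Hy. change (Rabs (y - t) < 1 - Rabs t) in Hy.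
  pose proof (Rabs_triang_inv y t). lra.
Qed.

Lemma pseries_pos (u : nat -> R) x : (forall n, 0 < u n) -> 0 < x -> ex_pseries u x ->
  0 < PSeries u x.
Proof.
  intros Hu Hx He. rewrite PSeries_decr_1 by auto.
  assert (0 <= PSeries (PS_decr_1 u) x).
  { rewrite <- (PSeries_const_0 x). unfold PSeries. apply Series_le.
    - intros k. unfold PS_decr_1. split. rewrite Rmult_0_l; lra.
      pose proof (Hu (S k)). pose proof (pow_lt x k Hx). nra.
    - assert (ex_pseries (PS_decr_1 u) x).
      { apply ex_pseries_decr_1; auto. right. exists (/ x). change (/ x * x = 1). field. lra. }
      unfold ex_pseries in H. eapply ex_series_ext; [|apply H].
      intros k. rewrite pow_n_pow. change (scal (x ^ k) (PS_decr_1 u k)) with (x ^ k * PS_decr_1 u k). apply Rmult_comm. }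
  pose proof (Hu 0%nat). nra.
Qed.

Theorem lemma9 (a b c : R) (ha : 0 < a) (hb : 0 < b) (hab : a + b <= 1)
  (hc : 0 <= c) :
  forall (n : nat) (x : R), 0 < x < 1 ->
    ex_derive_n (Bab a b c) (S n) x /\
    0 < Derive_n (fun t => - Derive (Bab a b c) t) n x.
Proof.
  intros n x hx.
  assert (Hx : Rabs x < 1) by (rewrite Rabs_right; lra).
  pose proof (rad_beta a b c ha hb hab hc) as Rb.
  assert (Eloc : forall t, Rabs t < 1 -> locally t (fun u => PSeries (beta a b c) u = Bab a b c u)).
  { intros t Ht. destruct (loc_lt1 t Ht) as [eps He]. exists eps. intros y Hy.
    symmetry. apply Bab_series; auto. }
  split.
  - eapply ex_derive_n_ext_loc. apply Eloc; auto.
    apply ex_derive_n_PSeries. apply lt1; auto.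
  - rewrite (Derive_n_ext_loc _ (PSeries (PS_opp (PS_derive (beta a b c))))).
    2: { destruct (loc_lt1 x Hx) as [eps He]. exists eps. intros y Hy.
         specialize (He y Hy).
         rewrite (Derive_ext_loc _ (PSeries (beta a b c))).
         rewrite Derive_PSeries. rewrite PSeries_opp. reflexivity.
         apply lt1; auto.
         destruct (Eloc y He) as [e2 H2]. exists e2. intros z Hz. symmetry. auto. }
    assert (Rd : Rbar_le 1 (CV_radius (PS_opp (PS_derive (beta a b c))))).
    { rewrite CV_radius_opp, CV_radius_derive. auto. }
    rewrite Derive_n_PSeries by (apply lt1; auto).
    apply pseries_pos; [| lra |].
    + intros k. unfold PS_derive_n, PS_opp, PS_derive.
      change (opp ?y) with (- y).
      pose proof (beta_neg a b c (k + n) ha hb hc).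
      apply Rmult_lt_0_compat.
      apply Rdiv_lt_0_compat; apply lt_0_INR, lt_O_fact.
      pose proof (lt_0_INR (S (k+n)) ltac:(lia)). nra.
    + apply CV_radius_inside. rewrite CV_radius_derive_n. apply lt1; auto.
Qed.
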